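(* Let $n\ge 1$, $h=1/n$, and for $0\le i\le n$ let $\tau_i=-2\sin\frac{i\pi}{2n}$ and $\sigma_i=2\big(2+\cos\frac{i\pi}{n}\big)$. Let $\bar A,\bar D\in\mathbb{R}^{(n+1)\times(n+1)}$ be tridiagonal: $\bar A$ has diagonal $(1,2,\dots,2,1)$ and off-diagonal entries $-1$; $\bar D$ has diagonal $(2,4,\dots,4,2)$ and off-diagonal entries $1$. Let $\bar B\in\mathbb{R}^{n\times(n+1)}$ have entries $\bar B_{k,k}=-1$, $\bar B_{k,k+1}=1$ ($1\le k\le n$), other entries zero. Let $\nu_0=\nu_n=\frac1{\sqrt2}$, $\nu_j=1$ for $1\le j\le n-1$. For $0\le j\le n$ let $\bar{\bm s}_j=\nu_j\big(\sin\frac{j\pi}{2n},\sin\frac{3j\pi}{2n},\dots,\sin\frac{(2n-1)j\pi}{2n}\big)^{\mathsf T}\in\mathbb{R}^n$ (so $\bar{\bm s}_0=\bm 0$) and $\tilde{\bm c}_j=\nu_j\big(1,\cos\frac{j\pi}{n},\dots,\cos\frac{(n-1)j\pi}{n},(-1)^j\big)^{\mathsf T}\in\mathbb{R}^{n+1}$. Consider the discrete eigenvalue problem: find $\lambda\in\mathbb{R}$ and $(U,V)\in\mathbb{R}^{n\times(n+1)}\times\mathbb{R}^{(n+1)\times n}$, $(U,V)\ne(0,0)$, with $$U\bar A-\bar BV\bar B=\tfrac{h^2}{6}\lambda\,U\bar D,\qquad -\bar B^{\mathsf T}U\bar B^{\mathsf T}+\bar AV=\tfrac{h^2}{6}\lambda\,\bar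 DV.$$ Then this problem has the following $2n(n+1)$ eigen-solutions, whose eigenvectors $(U,V)$ form a basis of $\mathbb{R}^{n\times(n+1)}\times\mathbb{R}^{(n+1)\times n}$ (a complete eigen-decomposition): (i) $n^2$ eigen-solutions satisfying the discrete divergence-free constraint $\bar B^{\mathsf T}U\bar D+\bar DV\bar B=0$: $$\lambda_{i,j}=\frac{6}{h^2}\Big(\frac{\tau_i^2}{\sigma_i}+\frac{\tau_j^2}{\sigma_j}\Big),\quad U_{i,j}=\tau_j\sigma_i\,\bar{\bm s}_i\tilde{\bm c}_j^{\mathsf T},\quad V_{i,j}=-\tau_i\sigma_j\,\tilde{\bm c}_i\bar{\bm s}_j^{\mathsf T},\qquad 1\le i,j\le n;$$ (ii) $(n+1)^2-1$ (discrete curl-free) eigen-solutions with eigenvalue $0$: $$\lambda=0,\quad U^0_{i,j}=\tau_i\,\bar{\bm s}_i\tilde{\bm c}_j^{\mathsf T},\quad V^0_{i,j}=\tau_j\,\tilde{\bm c}_i\bar{\bm s}_j^{\mathsf T},\qquad 0\le i,j\le n,\ (i,j)\ne(0,0).$$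
   Context: This is the algebraic form of the lowest-order rectangular Nédélec edge-element discretization of the Maxwell eigenvalue problem $\mathrm{curl}\,\mathrm{rot}\,\bm u=\lambda\bm u$ on $[0,1]^2$ with natural boundary conditions $\mathrm{rot}\,\bm u=0$, $\bm u\cdot\bm n=0$, on a uniform $n\times n$ mesh. For column vectors $\bm a,\bm b$, $\bm a\bm b^{\mathsf T}$ denotes the outer product (written $\bm a\otimes\bm b^{\mathsf T}$ in the paper). *)

(* Defs.v *)
From HB Require Import structures.
From mathcomp Require Import all_boot all_order all_algebra.
From mathcomp Require Import all_classical all_reals all_analysis.
Set Implicit Arguments. Unset Strict Implicit. Unset Printing Implicit Defensive.
Import Order.TTheory GRing.Theory Num.Theory.
Local Open Scope ring_scope.

Section Defs.
Variable R : realType.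

(* All indices are 0-based below; the paper's rows/columns 1..m become 0..m-1. *)

Definition hh (n : nat) : R := (n%:R)^-1.

Definition tau (n i : nat) : R := - 2 * sin (i%:R * pi / (2 * n%:R)).
Definition sigma (n i : nat) : R := 2 * (2 + cos (i%:R * pi / n%:R)).
Definition nu (n j : nat) : R :=
  if (j == 0)%N || (j == n)%N then (Num.sqrt (2 : R))^-1 else 1.

Definition Abar (n : nat) : 'M[R]_(n.+1) :=
  \matrix_(k, l)
    if k == l then (if ((k : nat) == 0)%N || ((k : nat) == n)%N then 1 else 2)
    else if ((k : nat).+1 == l)%N || ((l : nat).+1 == k)%N then -1 else 0.

Definition Dbar (n : nat) : 'M[R]_(n.+1) :=
  \matrix_(k, l)
    if k == l then (if ((k : nat) == 0)%N || ((k : nat) == n)%N then 2 else 4)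
    else if ((k : nat).+1 == l)%N || ((l : nat).+1 == k)%N then 1 else 0.

Definition Bbar (n : nat) : 'M[R]_(n, n.+1) :=
  \matrix_(k, l)
    if (l : nat) == k then -1 else if (l : nat) == (k : nat).+1 then 1 else 0.

Definition sbar (n j k : nat) : R :=
  nu n j * sin ((2 * k + 1)%:R * j%:R * pi / (2 * n%:R)).
Definition ctilde (n j k : nat) : R :=
  nu n j * cos (k%:R * j%:R * pi / n%:R).

Definition sc (n i j : nat) : 'M[R]_(n, n.+1) :=
  \matrix_(k, l) (sbar n i k * ctilde n j l).
Definition cs (n i j : nat) : 'M[R]_(n.+1, n) :=
  \matrix_(k, l) (ctilde n i k * sbar n j l).

Definition eigensolution (n : nat) (lam : R)
    (U : 'M[R]_(n, n.+1)) (V : 'M[R]_(n.+1, n)) : Prop :=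
  (U, V) <> (0, 0) /\
  U *m Abar n - Bbar n *m V *m Bbar n
    = ((hh n) ^+ 2 / 6 * lam) *: (U *m Dbar n) /\
  - ((Bbar n)^T *m U *m (Bbar n)^T) + Abar n *m V
    = ((hh n) ^+ 2 / 6 * lam) *: (Dbar n *m V).

Definition div_free (n : nat) (U : 'M[R]_(n, n.+1)) (V : 'M[R]_(n.+1, n)) :=
  (Bbar n)^T *m U *m Dbar n + Dbar n *m V *m Bbar n = 0.

(* family (i), paper indices i,j in 1..n *)
Definition lam1 (n i j : nat) : R :=
  6 / (hh n) ^+ 2 * ((tau n i) ^+ 2 / sigma n i + (tau n j) ^+ 2 / sigma n j).
Definition U1 (n i j : nat) : 'M[R]_(n, n.+1) := (tau n j * sigma n i) *: sc n i j.
Definition V1 (n i j : nat) : 'M[R]_(n.+1, n) := (- (tau n i * sigma n j)) *: cs n i j.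

(* family (ii), paper indices 0 <= i,j <= n, (i,j) <> (0,0) *)
Definition U0 (n i j : nat) : 'M[R]_(n, n.+1) := tau n i *: sc n i j.
Definition V0 (n i j : nat) : 'M[R]_(n.+1, n) := tau n j *: cs n i j.

End Defs.

(* Main.v *)
Require Import Defs.
From HB Require Import structures.
From mathcomp Require Import all_boot all_order all_algebra.
From mathcomp Require Import all_classical all_reals all_analysis.
From mathcomp Require Import ring lra zify.
Import Order.TTheory GRing.Theory Num.Theory.
Local Open Scope ring_scope.

Section Trig.
Variable R : realType.

Lemma sum_if (m p : nat) (F : nat -> R) :
  \sum_(l < m) (if (l : nat) == p then F l else 0) = if (p < m)%N then F p else 0.
Proof.
elim: m => [|m IH]; first by rewrite big_ord0.
rewrite big_ord_recr /= IH; case: (ltngtP p m) => h.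
- by rewrite ltnS (ltnW h) addr0.
- by rewrite ltnS leqNgt h addr0.
- by rewrite h ltnS leqnn add0r.
Qed.

Lemma sin_natpi (j : nat) : sin (j%:R * pi) = 0 :> R.
Proof.
elim: j => [|j IH]; first by rewrite mul0r sin0.
by rewrite -natr1 mulrDl mul1r sinDpi IH oppr0.
Qed.

Lemma cos_natpi (j : nat) : cos (j%:R * pi) = (-1) ^+ j :> R.
Proof.
elim: j => [|j IH]; first by rewrite mul0r cos0.
by rewrite -natr1 mulrDl mul1r cosDpi IH exprS mulN1r.
Qed.

Lemma trig1 (u b : R) : cos (u + b) - cos (u - b) = -2 * sin u * sin b.
Proof. rewrite cosB cosD; ring. Qed.
Lemma trig2 (u b : R) : sin (u - b) - sin (u + b) = -2 * cos u * sin b.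
Proof. rewrite sinB sinD; ring. Qed.
Lemma trig3 (u a : R) : cos (u - a) + cos (u + a) = 2 * cos a * cos u.
Proof. rewrite cosB cosD; ring. Qed.
Lemma trig4 (b : R) : cos (b + b) = 1 - 2 * sin b ^+ 2.
Proof. rewrite cosD -!expr2 cos2sin2; ring. Qed.

End Trig.

Section Mats.
Variables (R : realType) (n : nat).

Lemma sum_if_pred (M l : nat) (F : nat -> R) :
  \sum_(m < M) (if (m.+1 == l)%N then F m else 0) =
  if l is l'.+1 then (if (l' < M)%N then F l' else 0) else 0.
Proof.
case: l => [|l]; first by rewrite big1.
under eq_bigr => m _ do rewrite eqSS.
exact: sum_if.
Qed.

Lemma Bmul (f : nat -> R) (k : 'I_n) :
  (Bbar R n *m \col_(l < n.+1) f l) k 0 = f k.+1 - f k.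
Proof.
rewrite !mxE.
under eq_bigr => l _ do rewrite !mxE.
have E : forall l : 'I_n.+1,
   (if (l:nat) == k then -1 else if (l:nat) == k.+1 then 1 else 0) * f l
   = (if (l:nat) == k then - f l else 0) + (if (l:nat) == k.+1 then f l else 0).
  move=> l; repeat case: ifP => ?; rewrite ?addr0 ?add0r ?mulN1r ?mul1r ?mul0r //; lia.
under eq_bigr => l _ do rewrite E.
rewrite big_split /= sum_if (sum_if _ _ _ (fun l => - f l)) !ltnS (ltn_ord k) (ltnW (ltn_ord k)).
by rewrite addrC.
Qed.

Lemma BTmul (g : nat -> R) (l : 'I_n.+1) :
  ((Bbar R n)^T *m \col_(k < n) g k) l 0 =
  (if (l : nat) is l'.+1 then g l' else 0) - (if ((l : nat) < n)%N then g l else 0).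
Proof.
rewrite !mxE.
under eq_bigr => k _ do rewrite !mxE.
have E : forall k : 'I_n,
   (if (l:nat) == k then -1 else if (l:nat) == k.+1 then 1 else 0) * g k
   = (if (k:nat) == l then - g k else 0) + (if (k.+1 == l)%N then g k else 0).
  move=> k; repeat case: ifP => ?; rewrite ?addr0 ?add0r ?mulN1r ?mul1r ?mul0r //; lia.
under eq_bigr => k _ do rewrite E.
clear E.
rewrite big_split /= (sum_if _ _ _ (fun k => - g k)) sum_if_pred.
case: l => [[|l'] hl] /=.
  by rewrite addr0 sub0r; case: ifP => //; rewrite oppr0.
rewrite ltnS in hl; rewrite hl /=.
case: ifP => _; first by rewrite addrC.
by rewrite add0r subr0.
Qed.

Lemma Dmul (f : nat -> R) (l : 'I_n.+1) :
  (Dbar R n *m \col_(k < n.+1) f k) l 0 =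
  (if ((l : nat) == 0)%N || ((l : nat) == n)%N then 2 else 4) * f l
  + (if (l : nat) is l'.+1 then f l' else 0) + (if ((l : nat) < n)%N then f l.+1 else 0).
Proof.
rewrite !mxE.
under eq_bigr => k _ do rewrite !mxE.
set d := (if _ then _ else _).
have E : forall k : 'I_n.+1,
   (if l == k then d else if ((l:nat).+1 == k)%N || ((k:nat).+1 == l)%N then 1 else 0) * f k
   = (if (k:nat) == l then d * f k else 0) + (if (k.+1 == l)%N then f k else 0)
     + (if (k:nat) == l.+1 then f k else 0).
  move=> k; have -> : (l == k) = ((l:nat) == k) by [].
  repeat case: ifP => ?; rewrite ?addr0 ?add0r ?mulN1r ?mul1r ?mul0r //; lia.
under eq_bigr => k _ do rewrite E.
clear E.
rewrite !big_split /= (sum_if _ _ _ (fun k => d * f k)) sum_if sum_if_pred ltn_ord ltnS.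
case: l d => [[|l'] hl] d /=; rewrite ?add0r //.
by rewrite (ltnW hl).
Qed.

Lemma Amul (f : nat -> R) (l : 'I_n.+1) :
  (Abar R n *m \col_(k < n.+1) f k) l 0 =
  (if ((l : nat) == 0)%N || ((l : nat) == n)%N then 1 else 2) * f l
  - (if (l : nat) is l'.+1 then f l' else 0) - (if ((l : nat) < n)%N then f l.+1 else 0).
Proof.
rewrite !mxE.
under eq_bigr => k _ do rewrite !mxE.
set d := (if _ then _ else _).
have E : forall k : 'I_n.+1,
   (if l == k then d else if ((l:nat).+1 == k)%N || ((k:nat).+1 == l)%N then -1 else 0) * f k
   = (if (k:nat) == l then d * f k else 0) - (if (k.+1 == l)%N then f k else 0)
     - (if (k:nat) == l.+1 then f k else 0).
  move=> k; have -> : (l == k) = ((l:nat) == k) by [].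
  repeat case: ifP => ?; rewrite ?subr0 ?sub0r ?addr0 ?add0r ?mulN1r ?mul1r ?mul0r //; lia.
under eq_bigr => k _ do rewrite E.
clear E.
rewrite !sumrB /= (sum_if _ _ _ (fun k => d * f k)) sum_if sum_if_pred ltn_ord ltnS.
case: l d => [[|l'] hl] d /=; rewrite ?subr0 //.
by rewrite (ltnW hl).
Qed.

End Mats.

Section Vec.
Variables (R : realType) (n : nat).
Hypothesis hn : (0 < n)%N.

Definition al (j : nat) : R := j%:R * pi / n%:R.
Definition cv (j : nat) : 'cV[R]_n.+1 := \col_k ctilde R n j k.
Definition sv (j : nat) : 'cV[R]_n := \col_k sbar R n j k.

Lemma nR0 : (n%:R : R) != 0. Proof. by rewrite pnatr_eq0 -lt0n. Qed.

Lemma ctE j k : ctilde R n j k = nu R n j * cos (k%:R * al j).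
Proof. by rewrite /ctilde /al !mulrA. Qed.

Lemma sbE j k : sbar R n j k = nu R n j * sin (k%:R * al j + al j / 2).
Proof.
rewrite /sbar /al; congr (_ * sin _).
have := nR0; move=> h. field. by rewrite h.
Qed.

Lemma tauE j : tau R n j = -2 * sin (al j / 2).
Proof. rewrite /tau /al; congr (_ * sin _). have h := nR0. field. by rewrite h. Qed.

Lemma sigmaE j : sigma R n j = 2 * (2 + cos (al j)).
Proof. by rewrite /sigma /al. Qed.

Lemma natS (k : nat) (x : R) : k.+1%:R * x = k%:R * x + x.
Proof. by rewrite -natr1 mulrDl mul1r. Qed.

Lemma nal j : n%:R * al j = j%:R * pi.
Proof. rewrite /al. have h := nR0. field. by rewrite h. Qed.

Lemma cosa_half j : cos (al j) = 1 - 2 * sin (al j / 2) ^+ 2.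
Proof. rewrite -trig4; congr cos. by field. Qed.

Lemma den_gt0 j : 0 < 2 + cos (al j).
Proof. have := cos_geN1 (al j). lra. Qed.

Lemma R1 j : Bbar R n *m cv j = tau R n j *: sv j.
Proof.
apply/matrixP => k z; rewrite (ord1 z) Bmul !mxE !ctE sbE tauE.
set a := al j; set b := a / 2.
have h1 : k.+1%:R * a = (k%:R * a + b) + b by rewrite natS /b; field.
have h2 : k%:R * a = (k%:R * a + b) - b by rewrite addrK.
rewrite h1 {2}h2 -mulrBr trig1; ring.
Qed.

Lemma R2 j : (Bbar R n)^T *m sv j = (tau R n j / sigma R n j) *: (Dbar R n *m cv j).
Proof.
apply/matrixP => l z; rewrite (ord1 z) BTmul [in RHS]mxE Dmul.
rewrite tauE sigmaE !sbE !ctE.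
have hd0 : 2 + cos (al j) != 0 by rewrite gt_eqF // den_gt0.
set a := al j; set b := a / 2; set v := nu R n j.
rewrite -/a in hd0.
case: l => [[|l'] hl] /=.
  rewrite hn !mul0r mul1r add0r addr0 cos0.
  rewrite add0r; field; by rewrite hd0.
case: (ltngtP l'.+1 n) => hln.
- set w := l'.+1%:R * a.
  have h3 : l'.+2%:R * a = w + a by rewrite natS.
  have h4 : l'%:R * a + b = w - b by rewrite /w natS /b; field.
  have h5 : l'%:R * a = w - a by rewrite /w natS addrK.
  have h6 : a = b + b by rewrite /b; field.
  have e1 := trig2 R w b. have e2 := trig3 R w a.
  rewrite !sbE !ctE -/a -/b -/v h3 h4 h5.
  have -> : sin (w - b) = sin (w + b) + (-2 * cos w * sin b) by rewrite -e1; ring.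
  have -> : cos (w - a) = 2 * cos a * cos w - cos (w + a) by rewrite -e2; ring.
  field; by rewrite hd0.
- by move: hl; rewrite ltnS leqNgt hln.
  rewrite subr0 addr0 !sbE !ctE -/a -/b -/v.
  have hn1 : l'.+1%:R = n%:R :> R by rewrite hln.
  have h5 : l'%:R * a = n%:R * a - a by rewrite -hn1 natS addrK.
  have h4 : l'%:R * a + b = n%:R * a - b by rewrite h5 /b; field.
  rewrite hn1 h4 h5 /a nal sinB cosB sin_natpi cos_natpi -/a -/b.
  field; by rewrite hd0.
Qed.

Lemma R3 j : Abar R n *m cv j = ((tau R n j) ^+ 2 / sigma R n j) *: (Dbar R n *m cv j).
Proof.
apply/matrixP => l z; rewrite (ord1 z) Amul [in RHS]mxE Dmul.
rewrite tauE sigmaE.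
have hd0 : 2 + cos (al j) != 0 by rewrite gt_eqF // den_gt0.
have hc := cosa_half j.
set a := al j; set b := a / 2; set v := nu R n j.
rewrite -/a -/b in hc hd0.
have hd1 : 2 + (1 - 2 * sin b ^+ 2) != 0 by rewrite -hc.
case: l => [[|l'] hl] /=.
  rewrite hn !ctE -/a -/v ?mul0r ?mul1r ?subr0 ?add0r ?addr0 cos0 hc.
  field; by rewrite hd1.
case: (ltngtP l'.+1 n) => hln.
- set w := l'.+1%:R * a.
  have h3 : l'.+2%:R * a = w + a by rewrite natS.
  have h5 : l'%:R * a = w - a by rewrite /w natS addrK.
  have e2 := trig3 R w a.
  rewrite !ctE -/a -/v h3 h5.
  have -> : cos (w - a) = 2 * cos a * cos w - cos (w + a) by rewrite -e2; ring.
  rewrite hc; field; by rewrite hd1.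
- by move: hl; rewrite ltnS leqNgt hln.
- rewrite ?subr0 ?addr0 !ctE -/a -/v.
  have hn1 : l'.+1%:R = n%:R :> R by rewrite hln.
  have h5 : l'%:R * a = n%:R * a - a by rewrite -hn1 natS addrK.
  rewrite hn1 h5 /a nal cosB sin_natpi cos_natpi -/a hc.
  field; by rewrite hd1.
Qed.

End Vec.

Lemma trZ (R : realType) m k (a : R) (M : 'M[R]_(m,k)) : (a *: M)^T = a *: M^T.
Proof. by apply/matrixP => ? ?; rewrite !mxE. Qed.

Section Eig.
Variables (R : realType) (n : nat).
Hypothesis hn : (0 < n)%N.

Local Notation A := (Abar R n).
Local Notation B := (Bbar R n).
Local Notation D := (Dbar R n).
Local Notation cv := (cv R n).
Local Notation sv := (sv R n).
Local Notation tau := (tau R n).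
Local Notation sigma := (sigma R n).
Definition mu j := tau j ^+ 2 / sigma j.

Lemma symA : A^T = A.
Proof.
apply/matrixP => k l; rewrite !mxE.
case: (eqVneq k l) => [->//|ne]; by rewrite orbC.
Qed.

Lemma symD : D^T = D.
Proof.
apply/matrixP => k l; rewrite !mxE.
case: (eqVneq k l) => [->//|ne]; by rewrite orbC.
Qed.

Lemma sc_eq i j : sc R n i j = sv i *m (cv j)^T.
Proof. by apply/matrixP => k l; rewrite !mxE big_ord1 !mxE. Qed.

Lemma cs_eq i j : cs R n i j = cv i *m (sv j)^T.
Proof. by apply/matrixP => k l; rewrite !mxE big_ord1 !mxE. Qed.

Lemma T3 j : (cv j)^T *m A = mu j *: ((cv j)^T *m D).
Proof. by rewrite -[in LHS]symA -trmx_mul (@R3 R n hn) trZ trmx_mul symD. Qed.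

Lemma T1 j : (cv j)^T *m B^T = tau j *: (sv j)^T.
Proof. by rewrite -trmx_mul (@R1 R n hn) trZ. Qed.

Lemma T2 j : (sv j)^T *m B = (tau j / sigma j) *: ((cv j)^T *m D).
Proof. by rewrite -[B]trmxK -trmx_mul (@R2 R n hn) trZ trmx_mul symD. Qed.

Lemma R3' j : A *m cv j = mu j *: (D *m cv j).
Proof. exact: (@R3 R n hn). Qed.

Section PQ.
Variables (i j : nat) (p q : R).
Let U := p *: (sv i *m (cv j)^T).
Let V := q *: (cv i *m (sv j)^T).
Let X := sv i *m ((cv j)^T *m D).
Let Y := (D *m cv i) *m (sv j)^T.
Let Z := (D *m cv i) *m ((cv j)^T *m D).

Lemma eqUA : U *m A = (p * mu j) *: X.
Proof. by rewrite /U -scalemxAl -mulmxA T3 -scalemxAr scalerA. Qed.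

Lemma eqUD : U *m D = p *: X.
Proof. by rewrite /U -scalemxAl -mulmxA. Qed.

Lemma eqBVB : B *m V *m B = (q * tau i * (tau j / sigma j)) *: X.
Proof.
rewrite /V -scalemxAr -scalemxAl.
rewrite mulmxA (@R1 R n hn).
rewrite -mulmxA T2. 
by rewrite -scalemxAl -scalemxAr !scalerA.
Qed.

Lemma eqBUB : B^T *m U *m B^T = (p * (tau i / sigma i) * tau j) *: Y.
Proof.
rewrite /U -scalemxAr -scalemxAl mulmxA (@R2 R n hn) -mulmxA T1.
by rewrite -scalemxAl -scalemxAr !scalerA.
Qed.

Lemma eqAV : A *m V = (q * mu i) *: Y.
Proof. by rewrite /V -scalemxAr mulmxA R3' -scalemxAl scalerA. Qed.

Lemma eqDV : D *m V = q *: Y.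
Proof. by rewrite /V -scalemxAr mulmxA. Qed.

Lemma eqdiv : B^T *m U *m D + D *m V *m B
  = (p * (tau i / sigma i) + q * (tau j / sigma j)) *: Z.
Proof.
have e1 : B^T *m U *m D = (p * (tau i / sigma i)) *: Z.
  rewrite /U -scalemxAr -scalemxAl !mulmxA (@R2 R n hn).
  by rewrite -!scalemxAl scalerA /Z -!mulmxA.
have e2 : D *m V *m B = (q * (tau j / sigma j)) *: Z.
  rewrite /V -scalemxAr -scalemxAl -!mulmxA T2.
  by rewrite -!scalemxAr scalerA /Z -!mulmxA.
by rewrite e1 e2 scalerDl.
Qed.

End PQ.
End Eig.

Section Fam.
Variables (R : realType) (n : nat).
Hypothesis hn : (0 < n)%N.

Lemma sigma_neq0 j : sigma R n j != 0.
Proof. by rewrite sigmaE mulf_neq0 // gt_eqF // den_gt0. Qed.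

Lemma nu_neq0 j : nu R n j != 0.
Proof.
rewrite /nu; case: ifP => _; last exact: oner_neq0.
by rewrite invr_neq0 // gt_eqF // sqrtr_gt0.
Qed.

Lemma sinb_gt0 i : (1 <= i <= n)%N -> 0 < sin (al R n i / 2).
Proof.
case/andP => h1 h2.
have hi : (i%:R : R) <= n%:R by rewrite ler_nat.
have hpi := pi_gt0 R.
have hn0 : (0 : R) < n%:R by rewrite ltr0n.
have hi0 : (0:R) < i%:R by rewrite ltr0n.
have ha1 : al R n i <= pi.
  rewrite /al ler_pdivrMr //; nra.
have ha0 : 0 < al R n i by rewrite /al divr_gt0 // mulr_gt0.
apply: sin_gt0_pi; apply/andP; split; lra.
Qed.

Lemma tau_neq0 i : (1 <= i <= n)%N -> tau R n i != 0.
Proof. move=> h; by rewrite (@tauE R n hn) mulf_neq0 // ?gt_eqF ?sinb_gt0. Qed.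

Lemma sbar0_neq0 i : (1 <= i <= n)%N -> sbar R n i 0 != 0.
Proof. move=> h; by rewrite (@sbE R n hn) mul0r add0r mulf_neq0 ?nu_neq0 // gt_eqF ?sinb_gt0. Qed.

Lemma ctilde0 j : ctilde R n j 0 = nu R n j.
Proof. by rewrite /ctilde !mul0r cos0 mulr1. Qed.

Lemma hh_neq0 : hh R n != 0.
Proof. by rewrite /hh invr_neq0 // (@nR0 R n hn). Qed.

Lemma U_neq0 (p : R) i j : p != 0 -> (1 <= i <= n)%N ->
  p *: (sv R n i *m (cv R n j)^T) != 0.
Proof.
move=> hp hi; apply/eqP => hU.
have := congr1 (fun M : 'M[R]_(n, n.+1) => M (Ordinal hn) ord0) hU.
rewrite !mxE big_ord1 !mxE /= ctilde0 => /eqP.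
apply/negP; exact: (mulf_neq0 hp (mulf_neq0 (sbar0_neq0 _ hi) (nu_neq0 j))).
Qed.

Lemma V_neq0 (q : R) i j : q != 0 -> (1 <= j <= n)%N ->
  q *: (cv R n i *m (sv R n j)^T) != 0.
Proof.
move=> hp hi; apply/eqP => hU.
have := congr1 (fun M : 'M[R]_(n.+1, n) => M ord0 (Ordinal hn)) hU.
rewrite !mxE big_ord1 !mxE /= ctilde0 => /eqP.
apply/negP; exact: (mulf_neq0 hp (mulf_neq0 (nu_neq0 i) (sbar0_neq0 _ hi))).
Qed.

Lemma famI i j : (1 <= i <= n)%N -> (1 <= j <= n)%N ->
  eigensolution (lam1 R n i j) (U1 R n i j) (V1 R n i j)
  /\ div_free (U1 R n i j) (V1 R n i j).
Proof.
move=> hi hj.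
have si := sigma_neq0 i; have sj := sigma_neq0 j; have hh0 := hh_neq0.
have ti := tau_neq0 _ hi; have tj := tau_neq0 _ hj.
rewrite /U1 /V1 sc_eq cs_eq.
split; first split; [|split|].
- case=> hU _; move: (U_neq0 (tau R n j * sigma R n i) _ j (mulf_neq0 tj si) hi).
  by rewrite hU eqxx.
- rewrite (@eqUA R n hn) (@eqBVB R n hn) (@eqUD R n) -scalerBl scalerA; congr (_ *: _).
  rewrite /lam1 /mu; field.
  by rewrite hh0 si sj.
- rewrite (@eqBUB R n hn) (@eqAV R n hn) (@eqDV R n) -scaleNr -scalerDl scalerA; congr (_ *: _).
  rewrite /lam1 /mu; field.
  by rewrite hh0 si sj.
- rewrite /div_free (@eqdiv R n hn); apply/eqP; rewrite scaler_eq0; apply/orP; left.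
  apply/eqP; field. by rewrite si sj.
Qed.

Lemma famII i j : (i <= n)%N -> (j <= n)%N -> (i, j) <> (0%N, 0%N) ->
  eigensolution 0 (U0 R n i j) (V0 R n i j).
Proof.
move=> hi hj hij.
rewrite /U0 /V0 sc_eq cs_eq.
split; [|split].
- case=> hU hV; case: i hi hij hU hV => [|i] hi hij hU hV.
    case: j hj hij hU hV => [|j] hj hij hU hV; first by [].
    have h1 : (1 <= j.+1 <= n)%N by [].
    by move: (V_neq0 (tau R n j.+1) 0 _ (tau_neq0 _ h1) h1); rewrite hV eqxx.
  have h1 : (1 <= i.+1 <= n)%N by [].
  by move: (U_neq0 (tau R n i.+1) _ j (tau_neq0 _ h1) h1); rewrite hU eqxx.
- rewrite (@eqUA R n hn) (@eqBVB R n hn) (@eqUD R n) -scalerBl scalerA; congr (_ *: _).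
  have sj := sigma_neq0 j.
  rewrite /mu; field.
  by rewrite sj.
- rewrite (@eqBUB R n hn) (@eqAV R n hn) (@eqDV R n) -scaleNr -scalerDl scalerA; congr (_ *: _).
  have si := sigma_neq0 i.
  rewrite /mu; field.
  by rewrite si.
Qed.

End Fam.

Section Inv.
Variables (R : realType) (n : nat).
Hypothesis hn : (0 < n)%N.

Local Notation A := (Abar R n).
Local Notation B := (Bbar R n).
Local Notation D := (Dbar R n).
Local Notation cv := (cv R n).
Local Notation sv := (sv R n).
Local Notation tau := (tau R n).
Local Notation sigma := (sigma R n).
Local Notation mu := (mu R n).

Lemma muE j : mu j = (1 - cos (al R n j)) / (2 + cos (al R n j)).
Proof.
have hd : 2 + cos (al R n j) != 0 by rewrite gt_eqF // den_gt0.
rewrite /mu (@tauE R n hn) sigmaE.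
have hc := cosa_half R n j.
rewrite hc in hd *; field; by rewrite hd.
Qed.

Lemma al_itv j : (j <= n)%N -> al R n j \in `[0, pi].
Proof.
move=> hj; rewrite in_itv /=.
have hi : (j%:R : R) <= n%:R by rewrite ler_nat.
have hpi := pi_gt0 R.
have hn0 : (0 : R) < n%:R by rewrite ltr0n.
have hi0 : (0:R) <= j%:R by rewrite ler0n.
apply/andP; split; rewrite /al.
  by rewrite divr_ge0 // mulr_ge0 // ltW.
by rewrite ler_pdivrMr //; nra.
Qed.

Lemma mu_inj j k : (j <= n)%N -> (k <= n)%N -> mu j = mu k -> j = k.
Proof.
move=> hj hk; rewrite !muE => h.
have hx := den_gt0 R n j; have hy := den_gt0 R n k.
move: h; set x := cos _; set y := cos _ => h.
have hxy : x = y.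
  move/eqP: h; rewrite (eqr_div _ _ (lt0r_neq0 hx) (lt0r_neq0 hy)) => /eqP h.
  have : (x - y) * 3 = (1 - y) * (2 + x) - (1 - x) * (2 + y) by ring.
  rewrite h subrr => /eqP; rewrite mulf_eq0 subr_eq0 => /orP [/eqP //|].
  by rewrite pnatr_eq0.
have := cos_inj (al_itv _ hj) (al_itv _ hk) hxy.
rewrite /al => /(congr1 (fun t => t * n%:R / pi)).
have hpi := pi_gt0 R; have hn0 := @nR0 R n hn.
have hpi0 : pi != 0 :> R by rewrite gt_eqF.
rewrite !divfK // !mulfK // => /eqP; rewrite eqr_nat => /eqP.
done.
Qed.

Lemma G_orth j k : (j <= n)%N -> (k <= n)%N -> j != k ->
  (cv j)^T *m D *m cv k = 0.
Proof.
move=> hj hk hjk.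
have e1 : (cv j)^T *m A *m cv k = mu k *: ((cv j)^T *m D *m cv k).
  by rewrite -mulmxA (@R3' R n hn) -scalemxAr mulmxA.
have e2 : (cv j)^T *m A *m cv k = mu j *: ((cv j)^T *m D *m cv k).
  by rewrite (@T3 R n hn) -scalemxAl.
have : (mu k - mu j) *: ((cv j)^T *m D *m cv k) = 0 by rewrite scalerBl -e1 -e2 subrr.
move/eqP; rewrite scaler_eq0 subr_eq0 => /orP [/eqP h|/eqP //].
by move: hjk; rewrite (mu_inj _ _ hk hj h) eqxx.
Qed.

Lemma nu_gt0 j : 0 < nu R n j.
Proof.
rewrite /nu; case: ifP => _; last exact: ltr01.
by rewrite invr_gt0 sqrtr_gt0.
Qed.

Lemma ss_gt0 j : (1 <= j <= n)%N -> 0 < ((sv j)^T *m sv j) 0 0.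
Proof.
move=> hj; rewrite mxE (bigD1 (Ordinal hn)) //= !mxE.
have h1 : 0 < sbar R n j 0.
  by rewrite (@sbE R n hn) mul0r add0r mulr_gt0 ?nu_gt0 ?(@sinb_gt0 R n hn).
have h2 : 0 <= \sum_(i < n | i != Ordinal hn) (sv j)^T 0 i * sv j i 0.
  by apply: sumr_ge0 => i _; rewrite !mxE -expr2 sqr_ge0.
have h3 : 0 < sbar R n j 0 * sbar R n j 0 by rewrite mulr_gt0.
exact: ltr_pwDl.
Qed.

Lemma ctilde00 k : ctilde R n 0 k = nu R n 0.
Proof. by rewrite /ctilde mulr0 !mul0r cos0 mulr1. Qed.

Lemma G_pos j : (j <= n)%N -> 0 < ((cv j)^T *m D *m cv j) 0 0.
Proof.
move=> hj; case: j hj => [|j] hj.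
  rewrite -mulmxA mxE (bigD1 ord0) //=.
  have hD : forall l : 'I_n.+1, 0 < (D *m cv 0) l 0.
    move=> l; rewrite /cv Dmul !ctilde00.
    have hv := nu_gt0 0.
    have h1 : 0 < (if ((l : nat) == 0)%N || ((l : nat) == n)%N then 2 else 4) * nu R n 0.
      by case: ifP => _; rewrite mulr_gt0.
    have h2 : 0 <= (if (l : nat) is l'.+1 then ctilde R n 0 l' else 0).
      by case: (nat_of_ord l) => [|?] //; rewrite ctilde00 ltW.
    have h3 : 0 <= (if ((l : nat) < n)%N then nu R n 0 else 0).
      by case: ifP => _ //; rewrite ltW.
    apply: (lt_le_trans h1); rewrite -addrA lerDl; exact: addr_ge0.
  have h2 : 0 <= \sum_(i < n.+1 | i != ord0) (cv 0)^T 0 i * (D *m cv 0) i 0.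
    apply: sumr_ge0 => i _; apply: mulr_ge0; last exact: ltW (hD i).
    by rewrite !mxE ctilde00 ltW // nu_gt0.
  have h3 : 0 < (cv 0)^T 0 ord0 * (D *m cv 0) ord0 0.
    apply: mulr_gt0; last exact: hD.
    by rewrite !mxE ctilde00 nu_gt0.
  exact: ltr_pwDl.
have h1 : (1 <= j.+1 <= n)%N by [].
have ht := @tau_neq0 R n hn _ h1; have hs := sigma_neq0 R n j.+1.
have e : (tau j.+1 / sigma j.+1) *: ((cv j.+1)^T *m D *m cv j.+1)
         = tau j.+1 *: ((sv j.+1)^T *m sv j.+1).
  by rewrite scalemxAl -(@T2 R n hn) -mulmxA (@R1 R n hn) -scalemxAr.
have : (cv j.+1)^T *m D *m cv j.+1 = sigma j.+1 *: ((sv j.+1)^T *m sv j.+1).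
  apply: (scalerI (a := tau j.+1 / sigma j.+1)); first by rewrite mulf_neq0 ?invr_neq0.
  by rewrite e scalerA divfK.
move=> ->; rewrite mxE mulr_gt0 ?ss_gt0 //.
by rewrite sigmaE mulr_gt0 // den_gt0.
Qed.

Lemma ss_orth i k : (1 <= i <= n)%N -> (1 <= k <= n)%N -> i != k ->
  (sv i)^T *m sv k = 0.
Proof.
move=> hi hk hik.
have ht := @tau_neq0 R n hn _ hi.
apply: (scalerI (a := tau i)) => //; rewrite scaler0 scalemxAl -trZ -(@R1 R n hn).
rewrite trmx_mul -mulmxA (@R2 R n hn) -scalemxAr mulmxA G_orth ?scaler0 //.
  by case/andP: hi.
by case/andP: hk.
Qed.

Definition Cm : 'M[R]_n.+1 := \matrix_(j, k) ctilde R n j k.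
Definition Sm : 'M[R]_n := \matrix_(i, k) sbar R n i.+1 k.

Lemma unit_diag m (G : 'M[R]_m) : (forall i j, i != j -> G i j = 0) ->
  (forall i, G i i != 0) -> G \in unitmx.
Proof.
move=> h0 h1.
have -> : G = diag_mx (\row_i G i i).
  apply/matrixP => i j; rewrite !mxE; case: eqVneq => [->|ne].
    by rewrite mulr1n.
  by rewrite mulr0n h0.
rewrite unitmxE det_diag unitfE; apply/prodf_neq0 => i _; rewrite mxE; exact: h1.
Qed.

Lemma Cm_entry j k : (Cm *m D *m Cm^T) j k = ((cv j)^T *m D *m cv k) 0 0.
Proof.
transitivity (row j (Cm *m D *m Cm^T) 0 k); first by rewrite [in RHS]mxE.
rewrite !row_mul.
have -> : row j Cm = (cv j)^T by apply/matrixP => ? ?; rewrite !mxE.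
rewrite [in LHS]mxE [in RHS]mxE; apply: eq_bigr => l _.
congr (_ * _); by rewrite !mxE.
Qed.

Lemma Sm_entry i k : (Sm *m Sm^T) i k = ((sv i.+1)^T *m sv k.+1) 0 0.
Proof.
transitivity (row i (Sm *m Sm^T) 0 k); first by rewrite [in RHS]mxE.
rewrite !row_mul.
have -> : row i Sm = (sv i.+1)^T by apply/matrixP => ? ?; rewrite !mxE.
rewrite [in LHS]mxE [in RHS]mxE; apply: eq_bigr => l _.
congr (_ * _); by rewrite !mxE.
Qed.

Lemma CmU : Cm \in unitmx.
Proof.
have : Cm *m D *m Cm^T \in unitmx.
  apply: unit_diag => [j k jk|j]; rewrite Cm_entry.
    by rewrite (G_orth _ _ (ltn_ord j) (ltn_ord k) jk) mxE.
  by rewrite gt_eqF // (G_pos _ (ltn_ord j)).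
by rewrite !unitmx_mul => /andP [/andP [] ].
Qed.

Lemma SmU : Sm \in unitmx.
Proof.
have : Sm *m Sm^T \in unitmx.
  apply: unit_diag => [j k jk|j]; rewrite Sm_entry.
    have hj1 : (1 <= j.+1 <= n)%N by rewrite ltn_ord.
    have hk1 : (1 <= k.+1 <= n)%N by rewrite ltn_ord.
    by rewrite (ss_orth _ _ hj1 hk1) ?mxE // eqSS.
  have hj1 : (1 <= j.+1 <= n)%N by rewrite ltn_ord.
  by rewrite gt_eqF // (ss_gt0 _ hj1).
by rewrite !unitmx_mul => /andP [].
Qed.

End Inv.

Section Rep.
Variables (R : realType) (n : nat).
Hypothesis hn : (0 < n)%N.

Local Notation Cm := (Cm R n).
Local Notation Sm := (Sm R n).
Local Notation tau := (tau R n).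
Local Notation sigma := (sigma R n).

Lemma sum_sc (Z : 'M[R]_(n, n.+1)) :
  Sm^T *m Z *m Cm = \sum_(i < n) \sum_(j < n.+1) Z i j *: sc R n i.+1 j.
Proof.
apply/matrixP => k l; rewrite mxE summxE.
under eq_bigr => j _ do rewrite mxE big_distrl /=.
under [RHS]eq_bigr => i _ do rewrite summxE.
rewrite exchange_big /=; apply: eq_bigr => j _; apply: eq_bigr => i _.
rewrite !mxE; ring.
Qed.

Lemma sum_cs (Z : 'M[R]_(n.+1, n)) :
  Cm^T *m Z *m Sm = \sum_(i < n.+1) \sum_(j < n) Z i j *: cs R n i j.+1.
Proof.
apply/matrixP => k l; rewrite mxE summxE.
under eq_bigr => j _ do rewrite mxE big_distrl /=.
under [RHS]eq_bigr => i _ do rewrite summxE.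
rewrite exchange_big /=; apply: eq_bigr => j _; apply: eq_bigr => i _.
rewrite !mxE; ring.
Qed.

Lemma tau0 : tau 0 = 0.
Proof. by rewrite /Defs.tau !mul0r sin0 mulr0. Qed.

Definition Za (a : 'I_n -> 'I_n -> R) : 'M[R]_(n, n.+1) :=
  \matrix_(i, j) (if unlift ord0 j is Some j' then a i j' * (tau j * sigma i.+1) else 0).
Definition Zb (b : 'I_n.+1 -> 'I_n.+1 -> R) : 'M[R]_(n, n.+1) :=
  \matrix_(i, j) (b (lift ord0 i) j * tau i.+1).
Definition Za' (a : 'I_n -> 'I_n -> R) : 'M[R]_(n.+1, n) :=
  \matrix_(i, j) (if unlift ord0 i is Some i' then a i' j * (- (tau i * sigma j.+1)) else 0).
Definition Zb' (b : 'I_n.+1 -> 'I_n.+1 -> R) : 'M[R]_(n.+1, n) :=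
  \matrix_(i, j) (b i (lift ord0 j) * tau j.+1).

Lemma repU a b :
  \sum_(i < n) \sum_(j < n) a i j *: U1 R n i.+1 j.+1
  + \sum_(i < n.+1) \sum_(j < n.+1 | (i, j) != (ord0, ord0)) b i j *: U0 R n i j
  = Sm^T *m (Za a + Zb b) *m Cm.
Proof.
rewrite sum_sc.
have -> : \sum_(i < n) \sum_(j < n) a i j *: U1 R n i.+1 j.+1
       = \sum_(i < n) \sum_(j < n.+1) Za a i j *: sc R n i.+1 j.
  apply: eq_bigr => i _; rewrite [RHS]big_ord_recl /= mxE unlift_none scale0r add0r.
  apply: eq_bigr => j _; rewrite mxE liftK lift0 /U1 scalerA //.
have -> : \sum_(i < n.+1) \sum_(j < n.+1 | (i, j) != (ord0, ord0)) b i j *: U0 R n i j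
       = \sum_(i < n) \sum_(j < n.+1) Zb b i j *: sc R n i.+1 j.
  rewrite big_ord_recl /= big1 ?add0r; last first.
    by move=> j _; rewrite /U0 tau0 !scale0r scaler0.
  apply: eq_bigr => i _.
  rewrite big_mkcond; apply: eq_bigr => j _.
  by rewrite mxE /U0 /bump leq0n add1n scalerA.
rewrite -big_split /=; apply: eq_bigr => i _.
rewrite -big_split /=; apply: eq_bigr => j _.
by rewrite !mxE scalerDl.
Qed.

Lemma repV a b :
  \sum_(i < n) \sum_(j < n) a i j *: V1 R n i.+1 j.+1
  + \sum_(i < n.+1) \sum_(j < n.+1 | (i, j) != (ord0, ord0)) b i j *: V0 R n i j
  = Cm^T *m (Za' a + Zb' b) *m Sm.
Proof.
rewrite sum_cs.
have -> : \sum_(i < n) \sum_(j < n) a i j *: V1 R n i.+1 j.+1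
       = \sum_(i < n.+1) \sum_(j < n) Za' a i j *: cs R n i j.+1.
  rewrite [RHS]big_ord_recl /= [X in _ = X + _]big1 ?add0r; last first.
    by move=> j _; rewrite mxE unlift_none scale0r.
  apply: eq_bigr => i _; apply: eq_bigr => j _.
  by rewrite mxE liftK lift0 /V1 scalerA.
have -> : \sum_(i < n.+1) \sum_(j < n.+1 | (i, j) != (ord0, ord0)) b i j *: V0 R n i j
       = \sum_(i < n.+1) \sum_(j < n) Zb' b i j *: cs R n i j.+1.
  apply: eq_bigr => i _.
  rewrite big_mkcond big_ord_recl /=.
  rewrite [X in X + _](_ : _ = 0) ?add0r; last first.
    by case: ifP => _ //; rewrite /V0 tau0 !scale0r scaler0.
  apply: eq_bigr => j _.
  have hc : (i, lift ord0 j) != (ord0 : 'I_n.+1, ord0 : 'I_n.+1).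
    by apply/negP => /eqP [_ h]; move: h; rewrite /bump leq0n.
  rewrite hc.
  by rewrite mxE /V0 /bump leq0n add1n scalerA.
rewrite -big_split /=; apply: eq_bigr => i _.
rewrite -big_split /=; apply: eq_bigr => j _.
by rewrite !mxE scalerDl.
Qed.

End Rep.

Lemma solve2 (R : realType) (x y tI tJ sI sJ : R) : tI != 0 ->
  0 < tJ ^+ 2 * sI + tI ^+ 2 * sJ ->
  x * (tJ * sI) + y * tI = 0 -> x * (- (tI * sJ)) + y * tJ = 0 -> x = 0 /\ y = 0.
Proof.
move=> htI hD e1 e2.
have hx : x * (tJ ^+ 2 * sI + tI ^+ 2 * sJ)
  = tJ * (x * (tJ * sI) + y * tI) - tI * (x * (- (tI * sJ)) + y * tJ) by ring.
rewrite e1 e2 !mulr0 subrr in hx.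
move/eqP: hx; rewrite mulf_eq0 (gt_eqF hD) orbF => /eqP hx0.
split => //.
move: e1; rewrite hx0 mul0r add0r => /eqP; rewrite mulf_eq0 (negbTE htI) orbF.
by move/eqP.
Qed.

Lemma units_zero (R : realType) m k (P : 'M[R]_m) (Q : 'M[R]_k) (Z : 'M[R]_(m, k)) :
  P \in unitmx -> Q \in unitmx -> P *m Z *m Q = 0 -> Z = 0.
Proof.
move=> hP hQ h.
by rewrite -(mulKmx hP Z) -(mulmxK hQ (P *m Z)) h mul0mx mulmx0.
Qed.

Definition Dl (R : realType) n (I J : nat) : R :=
  tau R n J ^+ 2 * sigma R n I + tau R n I ^+ 2 * sigma R n J.

Lemma Dl_gt0 (R : realType) n (hn : (0 < n)%N) I J :
  (1 <= I <= n)%N -> (1 <= J <= n)%N -> 0 < Dl R n I J.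
Proof.
move=> hI hJ.
have sp : forall K, 0 < sigma R n K by move=> K; rewrite sigmaE mulr_gt0 // den_gt0.
have tp : forall K, (1 <= K <= n)%N -> 0 < tau R n K ^+ 2.
  move=> K hK; rewrite lt_def sqr_ge0 andbT expf_neq0 //.
  exact: (@tau_neq0 R n hn _ hK).
by rewrite /Dl addr_gt0 // mulr_gt0 // ?tp ?sp.
Qed.

Theorem theorem5p1 (R : realType) (n : nat) (hn : (1 <= n)%N) :
  (* (i): n^2 divergence-free eigen-solutions, 1 <= i,j <= n *)
  (forall i j : nat, (1 <= i <= n)%N -> (1 <= j <= n)%N ->
     eigensolution (lam1 R n i j) (U1 R n i j) (V1 R n i j)
     /\ div_free (U1 R n i j) (V1 R n i j)) /\
  (* (ii): (n+1)^2 - 1 eigen-solutions with eigenvalue 0 *)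
  (forall i j : nat, (i <= n)%N -> (j <= n)%N -> (i, j) <> (0%N, 0%N) ->
     eigensolution 0 (U0 R n i j) (V0 R n i j)) /\
  (* the 2n(n+1) eigenvectors form a basis: linearly independent ... *)
  (forall (a : 'I_n -> 'I_n -> R) (b : 'I_n.+1 -> 'I_n.+1 -> R),
     \sum_(i < n) \sum_(j < n) a i j *: U1 R n i.+1 j.+1
       + \sum_(i < n.+1) \sum_(j < n.+1 | (i, j) != (ord0, ord0))
           b i j *: U0 R n i j = 0 ->
     \sum_(i < n) \sum_(j < n) a i j *: V1 R n i.+1 j.+1
       + \sum_(i < n.+1) \sum_(j < n.+1 | (i, j) != (ord0, ord0))
           b i j *: V0 R n i j = 0 ->
     (forall i j, a i j = 0) /\
     (forall i j, (i, j) != (ord0, ord0) -> b i j = 0)) /\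
  (* ... and spanning *)
  (forall (X : 'M[R]_(n, n.+1)) (Y : 'M[R]_(n.+1, n)),
     exists (a : 'I_n -> 'I_n -> R) (b : 'I_n.+1 -> 'I_n.+1 -> R),
       X = \sum_(i < n) \sum_(j < n) a i j *: U1 R n i.+1 j.+1
           + \sum_(i < n.+1) \sum_(j < n.+1 | (i, j) != (ord0, ord0))
               b i j *: U0 R n i j /\
       Y = \sum_(i < n) \sum_(j < n) a i j *: V1 R n i.+1 j.+1
           + \sum_(i < n.+1) \sum_(j < n.+1 | (i, j) != (ord0, ord0))
               b i j *: V0 R n i j).
Proof.
split; first by move=> i j hi hj; exact: (@famI R n hn i j hi hj).
split; first by move=> i j hi hj hij; exact: (@famII R n hn i j hi hj hij).
have CU := @CmU R n hn; have SU := @SmU R n hn.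
have STU : (Sm R n)^T \in unitmx by rewrite unitmx_tr.
have CTU : (Cm R n)^T \in unitmx by rewrite unitmx_tr.
have tn0 : forall K : 'I_n, tau R n K.+1 != 0.
  by move=> K; apply: (@tau_neq0 R n hn); rewrite ltn_ord.
have Dp : forall I J : 'I_n, 0 < Dl R n I.+1 J.+1.
  by move=> I J; apply: (@Dl_gt0 R n hn); rewrite ltn_ord.
split.
- move=> a b hU hV.
  rewrite repU in hU; rewrite repV in hV.
  have hZu := units_zero _ _ _ _ _ _ STU CU hU.
  have hZv := units_zero _ _ _ _ _ _ CTU SU hV.
  have key : forall i j : 'I_n, a i j = 0 /\ b (lift ord0 i) (lift ord0 j) = 0.
    move=> i j.
    have e1 := congr1 (fun M : 'M[R]_(n, n.+1) => M i (lift ord0 j)) hZu.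
    have e2 := congr1 (fun M : 'M[R]_(n.+1, n) => M (lift ord0 i) j) hZv.
    move: e1 e2; rewrite /= !mxE !liftK !lift0 => e1 e2.
    exact: (solve2 _ _ _ _ _ _ _ (tn0 i) (Dp i j) e1 e2).
  split; first by move=> i j; case: (key i j).
  move=> i j hij.
  case: (unliftP ord0 i) => [i' ->|hi]; case: (unliftP ord0 j) => [j' ->|hj].
  + by case: (key i' j').
  + rewrite hj.
    have e := congr1 (fun M : 'M[R]_(n, n.+1) => M i' ord0) hZu.
    move: e; rewrite /= !mxE unlift_none add0r => /eqP.
    by rewrite mulf_eq0 (negbTE (tn0 i')) orbF => /eqP.
  + rewrite hi.
    have e := congr1 (fun M : 'M[R]_(n.+1, n) => M ord0 j') hZv.
    move: e; rewrite /= !mxE unlift_none add0r => /eqP.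
    by rewrite mulf_eq0 (negbTE (tn0 j')) orbF => /eqP.
  + by move: hij; rewrite hi hj eqxx.
- move=> X Y.
  have [Zx hX] : exists Zx, X = (Sm R n)^T *m Zx *m Cm R n.
    exists (invmx (Sm R n)^T *m X *m invmx (Cm R n)).
    by rewrite !mulmxA mulmxV // mul1mx mulmxKV.
  have [Zy hY] : exists Zy, Y = (Cm R n)^T *m Zy *m Sm R n.
    exists (invmx (Cm R n)^T *m Y *m invmx (Sm R n)).
    by rewrite !mulmxA mulmxV // mul1mx mulmxKV.
  pose a := fun i j : 'I_n =>
    (tau R n j.+1 * Zx i (lift ord0 j) - tau R n i.+1 * Zy (lift ord0 i) j) / Dl R n i.+1 j.+1.
  pose b := fun i j : 'I_n.+1 =>
    match unlift ord0 i, unlift ord0 j with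
    | Some i', Some j' => (tau R n i'.+1 * sigma R n j'.+1 * Zx i' j
                           + tau R n j'.+1 * sigma R n i'.+1 * Zy i j') / Dl R n i'.+1 j'.+1
    | Some i', None => Zx i' j / tau R n i'.+1
    | None, Some j' => Zy i j' / tau R n j'.+1
    | None, None => 0
    end.
  exists a, b; split.
  + rewrite repU hX; congr (_ *m _ *m _); apply/matrixP => i j; rewrite !mxE.
    case: (unliftP ord0 j) => [j' ->|->]; rewrite /b ?liftK ?unlift_none /=.
      have hD := Dp i j'; rewrite /a /bump leq0n add1n; rewrite /Dl in hD *.
      field; by rewrite gt_eqF.
    by rewrite add0r divfK.
  + rewrite repV hY; congr (_ *m _ *m _); apply/matrixP => i j; rewrite !mxE.
    case: (unliftP ord0 i) => [i' ->|->]; rewrite /b ?liftK ?unlift_none /=.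
      have hD := Dp i' j; rewrite /a /bump leq0n add1n; rewrite /Dl in hD *.
      field; by rewrite gt_eqF.
    by rewrite add0r divfK.
Qed.
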